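(* Let $R\ge1$ be an integer, $L=6R$, $\eta=n^{1/(2L)}$, and $\mu_*^A=\frac12+2\sum_{k:\,1\le2k+1\le L}\eta^{-(2k+1)}$. For any $\ell\in\{0,1,\ldots,L\}$ and any $\sigma^A\in\mathcal{D}_\ell^A$, $\Pr_{\mu^A\sim\sigma^A}[\mu^A=\mu_*^A]\le e^{4\ell/\eta}\eta^{-2d_1}$, where $d_1$ is the number of odd integers in $\{\ell+1,\ldots,L\}$.
   Context: For $\ell\in\{0,\ldots,L\}$, $S_\ell^A$ is the set of all numbers $\frac12+2\sum_{k:\,1\le2k+1\le\ell}\eta^{-(2k+1)}+2\sum_{k:\,\ell<2k+1\le L}X_{2k+1}\eta^{-(2k+1)}$ with all $X_{2k+1}\in\{0,1\}$. $\pi^A$ is the distribution of $\frac12+2\sum_{k:\,1\le2k+1\le L}X_{2k+1}\eta^{-(2k+1)}$ with $X_{2k+1}$ independent Bernoulli with mean $\eta^{-2}$. $\mathcal{D}_\ell^A$ is the class of distributions $\sigma^A$ with support $S_\ell^A$ such that for all $x,y\in S_\ell^A$, $\frac{\Pr_{\sigma^A}[x]}{\Pr_{\sigma^A}[y]}=\frac{\Pr_{\pi^A}[x]}{\Pr_{\pi^A}[y]}\cdot e^{c}$ for some $c\in[-4\ell/\eta,4\ell/\eta]$. *)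

(* Defs.v *)
From HB Require Import structures.
From mathcomp Require Import all_boot all_order all_algebra.
From mathcomp Require Import reals sequences exp.
Unset Printing Implicit Defensive.
Import Order.TTheory GRing.Theory Num.Theory.
Local Open Scope ring_scope.

(* Index k ranges over {k : 1 <= 2k+1 <= L}, i.e. k < (L+1)/2; X k stands for X_{2k+1}. *)
Notation oddIdx L := ('I_(L.+1./2)).

Section Defs.
Variable R : realType.

Definition etaA (n L : nat) : R := (n%:R) `^ ((2 * L)%:R)^-1.

Definition muA (eta : R) (L l : nat) (X : {ffun oddIdx L -> bool}) : R :=
  2^-1 + 2 * (\sum_(k < L.+1./2 | (2 * k + 1 <= l)%N) eta ^- (2 * k + 1))
       + 2 * (\sum_(k < L.+1./2 | (l < 2 * k + 1)%N) (X k)%:R * eta ^- (2 * k + 1)).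

(* S_l^A, as a (possibly repetitive) list of reals *)
Definition SA (eta : R) (L l : nat) : seq R :=
  [seq muA eta L l X | X : {ffun oddIdx L -> bool}].

Definition muStar (eta : R) (L : nat) : R :=
  2^-1 + 2 * (\sum_(k < L.+1./2) eta ^- (2 * k + 1)).

(* Pr_{pi^A}[x]: X_{2k+1} independent Bernoulli(eta^{-2}) *)
Definition piA (eta : R) (L : nat) (x : R) : R :=
  \sum_(X : {ffun oddIdx L -> bool} | muA eta L 0 X == x)
     \prod_(k < L.+1./2) (if X k then eta ^- 2 else 1 - eta ^- 2).

(* sigma : R -> R is a probability mass function whose support is exactly S_l^A,
   with the ratio condition defining D_l^A. *)
Definition inDA (eta : R) (L l : nat) (sigma : R -> R) : Prop :=
  [/\ (forall x, 0 <= sigma x),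
      (forall x, sigma x != 0 <-> x \in SA eta L l),
      \sum_(x <- undup (SA eta L l)) sigma x = 1 &
      (forall x y, x \in SA eta L l -> y \in SA eta L l ->
         exists c : R, - (4 * l%:R / eta) <= c <= 4 * l%:R / eta /\
           sigma x / sigma y = piA eta L x / piA eta L y * expR c)].

Definition d1 (L l : nat) : nat := count odd (iota l.+1 (L - l)).

End Defs.

(* Main.v *)
Require Import Defs.
From HB Require Import structures.
From mathcomp Require Import all_boot all_order all_algebra.
From mathcomp Require Import reals sequences exp.
From mathcomp Require Import zify.
From mathcomp.algebra_tactics Require Import ring.
Import Order.TTheory GRing.Theory Num.Theory.
Lemma cnt0 l : count (fun k => l < 2*k+1) (iota 0 l.+1./2) = 0.
Proof.
apply/eqP; rewrite -leqn0 leqNgt -has_count; apply/hasPn => k.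
rewrite mem_iota /= -leqNgt => hk; move: hk; rewrite uphalfE -divn2; lia.
Qed.

Lemma cnt L l : l <= L -> count (fun k => l < 2*k+1) (iota 0 L.+1./2) = count odd (iota l.+1 (L-l)).
Proof.
elim: L => [|L IH] hl.
  by move: hl; rewrite leqn0 => /eqP->.
case: (ltngtP l L.+1) hl => // [hl _|-> _]; last by rewrite cnt0 subnn.
have e1 : L.+2./2 = L.+1./2 + odd L.+1.
  by rewrite -!divn2 -modn2; lia.
rewrite e1 (iotaD 0 (L.+1./2)) count_cat IH // subSn // -[(L-l).+1]addn1 iotaD count_cat.
congr (_ + _).
have -> : l.+1 + (L-l) = L.+1 by lia.
have hh := odd_double_half L.+1.
rewrite add0n /=; move: hh => /=.
case hL: (odd L) => /= hh.
  by rewrite !addn0.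
rewrite !addn0.
suff -> : l < 2 * uphalf L + 1 by [].
move: hh hl; rewrite -mul2n; lia.
Qed.

Local Open Scope ring_scope.

Lemma sum_partition (R : realType) (T : finType) (f : T -> R) (w : T -> R) (s : seq R) :
  uniq s ->
  \sum_(y <- s) \sum_(X | f X == y) w X = \sum_X (f X \in s)%:R * w X.
Proof.
elim: s => [|y s IH] /= hu.
  by rewrite big_nil big1 // => X _; rewrite mul0r.
case/andP: hu => hy hu.
rewrite big_cons IH // big_mkcond -big_split /=; apply: eq_bigr => X _.
rewrite in_cons; case: eqP => [->|ne] /=.
  by rewrite (negbTE hy) mul1r mul0r addr0.
by rewrite add0r.
Qed.

Lemma iter_mul (R : realType) (a : R) m : iter m ( *%R a) 1 = a ^+ m.
Proof. by elim: m => //= m ->; rewrite exprS. Qed.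

Lemma main (R : realType) (L n l : nat) (sigma : R -> R) :
  (1 <= n)%N -> (l <= L)%N ->
  inDA R (etaA R n L) L l sigma ->
  sigma (muStar R (etaA R n L) L)
    <= expR (4 * l%:R / etaA R n L) * etaA R n L ^- (2 * d1 L l).
Proof.
move=> hn hl [hge hsupp hsum hrat].
set eta := etaA R n L.
have eta1 : 1 <= eta.
  rewrite /eta /etaA; have h1 : 1 <= (n%:R : R) by rewrite ler1n.
  rewrite -{1}(powRr0 (n%:R)); apply: ler_powR => //.
  by rewrite invr_ge0.
have eta0 : 0 < eta by apply: lt_le_trans eta1.
have e0 : forall m : nat, 0 < eta ^- m by move=> m; rewrite invr_gt0 exprn_gt0.
have w1 : eta ^- 2 <= 1 by rewrite invf_le1 ?exprn_gt0 // exprn_ege1.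
set P0 := \prod_(k < L.+1./2 | (2*k+1 <= l)%N) eta ^- 2.
set P1 := \prod_(k < L.+1./2 | (l < 2*k+1)%N) eta ^- 2.
pose all1 : {ffun 'I_(L.+1./2) -> bool} := [ffun => true].
have muA0 : forall X, muA R eta L 0 X =
    2^-1 + 2 * \sum_(k < L.+1./2) (X k)%:R * eta ^- (2*k+1).
  move=> X; rewrite /muA big_pred0; last by move=> k; rewrite leqn0 addn1.
  by rewrite mulr0 addr0 (eq_bigl xpredT) // => k; rewrite addn1.
have muAl : forall X : {ffun 'I_(L.+1./2) -> bool}, (forall k : 'I_(L.+1./2), (2*k+1 <= l)%N -> X k) ->
    muA R eta L l X = muA R eta L 0 X.
  move=> X hX; rewrite muA0 /muA.
  have -> : \sum_(k < L.+1./2) (X k)%:R * eta ^- (2*k+1) =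
     \sum_(k < L.+1./2 | (2*k+1 <= l)%N) eta ^- (2*k+1) +
     \sum_(k < L.+1./2 | (l < 2*k+1)%N) (X k)%:R * eta ^- (2*k+1).
    rewrite (bigID (fun k : 'I_(L.+1./2) => (2*k+1 <= l)%N)) /=; congr (_ + _).
      by apply: eq_bigr => k hk; rewrite hX // mul1r.
    by apply: eq_bigl => k; rewrite -ltnNge.
  by rewrite mulrDr addrA.
have mus0 : muStar R eta L = muA R eta L 0 all1.
  rewrite muA0 /muStar; congr (_ + 2 * _); apply: eq_bigr => k _.
  by rewrite /all1 ffunE mul1r.
have musl : muStar R eta L = muA R eta L l all1 by rewrite mus0 muAl // => k; rewrite /all1 ffunE.
pose x := muStar R eta L.
have xS : x \in SA R eta L l.
  by rewrite /x musl /SA; apply: map_f; rewrite mem_enum.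
have piAx : piA R eta L x = P0 * P1.
  rewrite /piA (eq_bigl (pred1 all1)); last first.
    move=> X /=; apply/eqP/eqP => [h|->]; last by rewrite /x mus0.
    apply/ffunP => k; rewrite /all1 ffunE.
    move: h; rewrite /x mus0 !muA0 => /addrI/eqP; rewrite (inj_eq (mulfI _)) ?pnatr_eq0 // => /eqP h3.
    have h2 : \sum_(k < L.+1./2) (1 - (X k)%:R) * eta ^- (2*k+1) = 0.
      rewrite (eq_bigr (fun k : 'I_(L.+1./2) => eta ^- (2*k+1) - (X k)%:R * eta ^- (2*k+1))); last first.
        by move=> i _; rewrite mulrBl mul1r.
      rewrite sumrB h3; apply/eqP; rewrite subr_eq0; apply/eqP; apply: eq_bigr => i _.
      by rewrite /all1 ffunE mul1r.
    have := psumr_eq0P _ h2 (isT : true) (i := k).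
    have : forall i : 'I_(L.+1./2), true -> 0 <= (1 - (X i)%:R) * eta ^- (2*i+1).
      by move=> i _; case: (X i); rewrite ?subrr ?mul0r // subr0 mul1r ltW.
    move=> hpos /(_ hpos) /eqP; rewrite mulf_eq0 (gt_eqF (e0 _)) orbF.
    by case: (X k) => //=; rewrite subr0 oner_eq0.
  rewrite big_pred1_eq (eq_bigr (fun _ => eta ^- 2)); last by move=> k _; rewrite /all1 ffunE.
  rewrite (bigID (fun k : 'I_(L.+1./2) => (2*k+1 <= l)%N)) /=; congr (_ * _).
  by apply: eq_bigl => k; rewrite -ltnNge.
have P0pos : 0 < P0 by apply: prodr_gt0.
have P1pos : 0 < P1 by apply: prodr_gt0.
have piApos : 0 < piA R eta L x by rewrite piAx mulr_gt0.
have sumpi : P0 <= \sum_(y <- undup (SA R eta L l)) piA R eta L y.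
  rewrite /piA sum_partition ?undup_uniq //.
  pose F := fun (k : 'I_(L.+1./2)) (b : bool) => if b then eta ^- 2 else 1 - eta ^- 2.
  pose Q := fun (k : 'I_(L.+1./2)) (b : bool) => ((2*k+1 <= l)%N ==> b).
  have -> : P0 = \prod_k \sum_(b | Q k b) F k b.
    rewrite /P0 big_mkcond; apply: eq_bigr => k _.
    rewrite big_mkcond big_bool /Q /F /=.
    by case: (2*k+1 <= l)%N => /=; rewrite ?addr0 // addrC subrK.
  rewrite bigA_distr_big_dep big_mkcond /=.
  apply: ler_sum => X _; case: ifP => hX.
    rewrite mem_undup -muAl; last first.
      move=> k hk; move/familyP: hX => /(_ k); by rewrite unfold_in /Q hk /=; apply.
    have hm : muA R eta L l X \in SA R eta L l by rewrite /SA; apply: map_f; rewrite mem_enum.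
    by rewrite hm mul1r.
  apply: mulr_ge0 => //; apply: prodr_ge0 => k _.
  by case: (X k); rewrite ?subr_ge0 // ltW.
set B := 4 * l%:R / eta.
have bound : forall y, y \in SA R eta L l ->
    sigma x * expR (- B) * (piA R eta L y / piA R eta L x) <= sigma y.
  move=> y hy; have [c [/andP[hc1 hc2] heq]] := hrat _ _ xS hy.
  have ha : 0 < sigma x by rewrite lt0r hge andbT; apply/(hsupp x).2.
  have hb : 0 < sigma y by rewrite lt0r hge andbT; apply/(hsupp y).2.
  have hq : piA R eta L y != 0.
    apply/eqP => q0; move: heq; rewrite q0 invr0 mulr0 mul0r => /eqP.
    by rewrite mulf_eq0 invr_eq0 (gt_eqF ha) (gt_eqF hb).
  have eb : sigma y = sigma x * (piA R eta L y / piA R eta L x) * expR (- c).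
    have -> : sigma y = sigma x / (sigma x / sigma y).
      by field; rewrite (gt_eqF ha) (gt_eqF hb).
    rewrite heq expRN; field.
    by rewrite hq (gt_eqF piApos) (gt_eqF (expR_gt0 _)).
  have hqp : 0 <= sigma x * (piA R eta L y / piA R eta L x).
    by move: hb; rewrite eb pmulr_lgt0 ?expR_gt0 // => /ltW.
  by rewrite mulrAC eb; apply: ler_wpM2l => //; rewrite ler_expR lerN2.
have h1 : sigma x * expR (- B) / (P0 * P1) *
    \sum_(y <- undup (SA R eta L l)) piA R eta L y <= 1.
  rewrite -hsum mulr_sumr !big_seq; apply: ler_sum => y hy.
  rewrite -piAx mulrAC -mulrA; apply: bound; by rewrite -mem_undup.
have h2 : sigma x * expR (- B) / P1 <= 1.
  apply: le_trans h1; have -> : sigma x * expR (- B) / P1 =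
      sigma x * expR (- B) / (P0 * P1) * P0.
    by field; rewrite (gt_eqF P0pos) (gt_eqF P1pos).
  apply: ler_wpM2l => //; apply: mulr_ge0; last by rewrite invr_ge0 ltW // mulr_gt0.
  by apply: mulr_ge0; [apply: hge | apply: ltW; apply: expR_gt0].
rewrite -/x.
have -> : sigma x = sigma x * expR (- B) / P1 * (expR B * P1).
  rewrite expRN; field; by rewrite (gt_eqF P1pos) (gt_eqF (expR_gt0 _)).
have -> : eta ^- (2 * d1 L l) = P1.
  rewrite /P1 -(big_mkord (fun k => l < 2*k+1)%N (fun _ => eta ^- 2)).
  rewrite big_const_seq iter_mul /index_iota subn0 cnt // /d1.
  by rewrite exprVn -exprM.
apply: ler_piMl => //; apply: mulr_ge0; [apply: ltW; apply: expR_gt0| exact: ltW].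
Qed.

Theorem lemma9 (R : realType) (Rr n l : nat) (sigma : R -> R) :
  (1 <= Rr)%N -> (1 <= n)%N -> (l <= 6 * Rr)%N ->
  inDA R (etaA R n (6 * Rr)) (6 * Rr) l sigma ->
  sigma (muStar R (etaA R n (6 * Rr)) (6 * Rr))
    <= expR (4 * l%:R / etaA R n (6 * Rr)) * etaA R n (6 * Rr) ^- (2 * d1 (6 * Rr) l).
Proof. by move=> _; apply: main. Qed.
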